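(* Let $K$ be a compact line, let $T:K\to\mathbb{R}$ be a nondecreasing right-continuous function, and let $h:K\to\mathbb{R}$ be $T$-integrable. Define $H(x)=\int_{0_K}^x h\,dT$ for $x\in K$. If $f:K\to\mathbb{R}$ is bounded, then $f$ is $H$-integrable if and only if $fh$ is $T$-integrable, and in this case $\int_K f\,dH=\int_K fh\,dT$.
   Context: A compact line is a compact space $K$ whose topology is the order topology of a linear order on $K$; $0_K$ and $1_K$ denote its minimum and maximum, and $0_K<1_K$. A tagged partition of $K$ is a finite family $P=\{([x_{i-1},x_i],t_i):i=1,\dots,n\}$ with $0_K=x_0\le\cdots\le x_n=1_K$ and $t_i\in[x_{i-1},x_i]$. A gauge assigns to each $x\in K$ an open interval $\delta(x)\ni x$; $P$ is $\delta$-fine if $[x_{i-1},x_i]\subset\delta(t_i)$ for all $i$. With $S(f,G,P)=f(0_K)G(0_K)+\sum_{i=1}^n f(t_i)(G(x_i)-G(x_{i-1}))$, $f$ is $G$-integrable if there is $A\in\mathbb{R}$ such that for every $\varepsilon>0$ some gauge $\delta$ gives $|S(f,G,P)-A|<\varepsilon$ for all $\delta$-fine $P$; $\int_K f\,dG=A$. For $x\in K$, $\int_{0_K}^x h\,dT$ denotes the integral, in this sense, of $h|_{[0_K,x]}$ with respect to $T|_{[0_K,x]}$ on the compact line $[0_K,x]$ (which exists whenever $h$ is $T$-integrable on $K$). *)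

(* Defs.v *)
From HB Require Import structures.
From mathcomp Require Import all_boot all_order all_algebra.
From mathcomp Require Import all_classical all_reals.
From mathcomp Require Import topology normedtype.
Set Implicit Arguments. Unset Strict Implicit. Unset Printing Implicit Defensive.
Import Order.TTheory GRing.Theory Num.Theory.
Import numFieldTopology.Exports numFieldNormedType.Exports.
Local Open Scope classical_set_scope.
Local Open Scope ring_scope.

Section Gauge.
Context {d : Order.disp_t} {K : orderTopologicalType d} {R : realType}.

Definition gauge (delta : K -> interval K) : Prop :=
  forall x : K, itv_open_ends (delta x) /\ x \in delta x.

Definition tagged_partition (a b : K) (n : nat) (x t : nat -> K) : Prop :=
  x 0%N = a /\ x n = b /\
  (forall i : nat, (0 < i <= n)%N ->
     (x i.-1 <= x i)%O /\ (x i.-1 <= t i)%O /\ (t i <= x i)%O).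

Definition fine (delta : K -> interval K) (n : nat) (x t : nat -> K) : Prop :=
  forall i : nat, (0 < i <= n)%N ->
    forall y : K, (x i.-1 <= y)%O -> (y <= x i)%O -> y \in delta (t i).

Definition riemann_sum (a : K) (f G : K -> R) (n : nat) (x t : nat -> K) : R :=
  f a * G a + \sum_(1 <= i < n.+1) f (t i) * (G (x i) - G (x i.-1)).

Definition is_integral_on (a b : K) (f G : K -> R) (A : R) : Prop :=
  forall eps : R, 0 < eps ->
    exists delta : K -> interval K, gauge delta /\
      forall (n : nat) (x t : nat -> K),
        tagged_partition a b n x t -> fine delta n x t ->
        `|riemann_sum a f G n x t - A| < eps.

Definition integrable_on (a b : K) (f G : K -> R) : Prop :=
  exists A : R, is_integral_on a b f G A.

(* the integral (a value A as above; 0 if none exists) *)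
Definition integral_on (a b : K) (f G : K -> R) : R :=
  xget 0 [set A | is_integral_on a b f G A].

End Gauge.

(* Main.v *)
Require Import Defs.
From HB Require Import structures.
From mathcomp Require Import all_boot all_order all_algebra.
From mathcomp Require Import all_classical all_reals.
From mathcomp Require Import topology normedtype.
From mathcomp Require Import zify ring lra.
Import Order.TTheory GRing.Theory Num.Theory.
Import numFieldTopology.Exports numFieldNormedType.Exports.
Local Open Scope classical_set_scope.
Local Open Scope ring_scope.
Set Implicit Arguments. Unset Strict Implicit. Unset Printing Implicit Defensive.
Section Itv.
Context {d : Order.disp_t} {K : orderTopologicalType d}.

Definition lob (lo : option K) (w : K) : bool := if lo is Some u then (u < w)%O else true.
Definition hib (hi : option K) (w : K) : bool := if hi is Some v then (w < v)%O else true.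
Definition lo_of (i : interval K) : option K :=
  match i with Interval (BSide _ u) _ => Some u | _ => None end.
Definition hi_of (i : interval K) : option K :=
  match i with Interval _ (BSide _ v) => Some v | _ => None end.

Lemma open_rep (i : interval K) : itv_open_ends i ->
  forall w, (w \in i) = lob (lo_of i) w && hib (hi_of i) w.
Proof.
by case: i => [[[]u|[]] [[]v|[]]] //= _ w; rewrite in_itv /= ?andbT.
Qed.

Definition mkitv (lo hi : option K) : interval K :=
  Interval (if lo is Some u then BRight u else BInfty _ true)
           (if hi is Some v then BLeft v else BInfty _ false).

Lemma mkitv_open lo hi : itv_open_ends (mkitv lo hi).
Proof. by case: lo => [u|]; case: hi => [v|]. Qed.

Lemma mkitvE lo hi w : (w \in mkitv lo hi) = lob lo w && hib hi w.
Proof. by case: lo => [u|]; case: hi => [v|]; rewrite /= in_itv /= ?andbT. Qed.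

Definition omax (a b : option K) := match a, b with
  | Some u, Some v => Some (Order.max u v) | None, _ => b | _, None => a end.
Definition omin (a b : option K) := match a, b with
  | Some u, Some v => Some (Order.min u v) | None, _ => b | _, None => a end.

Lemma lob_omax a b w : lob (omax a b) w = lob a w && lob b w.
Proof. by case: a => [u|]; case: b => [v|] //=; rewrite ?andbT // gt_max. Qed.
Lemma hib_omin a b w : hib (omin a b) w = hib a w && hib b w.
Proof. by case: a => [u|]; case: b => [v|] //=; rewrite ?andbT // lt_min. Qed.

Definition gmeet (d1 d2 : K -> interval K) (x : K) : interval K :=
  mkitv (omax (lo_of (d1 x)) (lo_of (d2 x))) (omin (hi_of (d1 x)) (hi_of (d2 x))).

Lemma gmeetP d1 d2 : gauge d1 -> gauge d2 ->
  gauge (gmeet d1 d2) /\ forall x w, w \in gmeet d1 d2 x -> w \in d1 x /\ w \in d2 x.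
Proof.
move=> g1 g2.
have key : forall x w, (w \in gmeet d1 d2 x) = (w \in d1 x) && (w \in d2 x).
  move=> x w; rewrite mkitvE lob_omax hib_omin.
  rewrite (open_rep (proj1 (g1 x))) (open_rep (proj1 (g2 x))).
  by case: (lob _ w); case: (lob _ w); case: (hib _ w); case: (hib _ w).
split; last by move=> x w; rewrite key => /andP.
move=> x; split; first exact: mkitv_open.
by rewrite key (proj2 (g1 x)) (proj2 (g2 x)).
Qed.

End Itv.
Section Lub.
Context {d : Order.disp_t} {K : orderTopologicalType d}.

Lemma itv_nbhs (p : K) (i : interval K) : itv_open_ends i -> p \in i -> nbhs p [set` i].
Proof. by move=> oi pi; rewrite itv_nbhsE; exists i. Qed.

Lemma lub_ex (hc : compact [set: K]) (S : set K) (s0 u0 : K) :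
  S s0 -> (forall y, S y -> (y <= u0)%O) ->
  exists p, (forall y, S y -> (y <= p)%O) /\
            (forall u, (forall y, S y -> (y <= u)%O) -> (p <= u)%O).
Proof.
move=> Ss0 ub0.
pose D := [set ij : K * K | S ij.1 /\ forall y, S y -> (y <= ij.2)%O].
pose B := fun ij : K * K => [set z : K | (ij.1 <= z)%O /\ (z <= ij.2)%O].
have FF : Filter (filter_from D B).
  apply: filter_from_filter; first by exists (s0, u0).
  move=> [s u] [s' u'] /= [Ss ubu] [Ss' ubu'].
  exists ((if (s <= s')%O then s' else s), (if (u <= u')%O then u else u')).
    rewrite /D /=; split; first by case: ifP.
    by case: ifP => _ y Sy; [exact: ubu|exact: ubu'].
  move=> z [h1 h2]; simpl in h1, h2 |- *; split; split.
  - by case: ifP h1 => [ss' h|_ h] //; exact: le_trans ss' h.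
  - case: ifP h2 => [_ h|/negbT] //; rewrite -ltNge => /ltW uu' h; exact: le_trans h uu'.
  - case: ifP h1 => [_ h|/negbT] //; rewrite -ltNge => /ltW ss' h; exact: le_trans ss' h.
  - by case: ifP h2 => [uu' h|_ h] //; exact: le_trans h uu'.
have PF : ProperFilter (filter_from D B).
  apply: filter_from_proper => -[s u] /= [Ss ubu]; exists s; split => //.
  exact: ubu.
have [p [_ clp]] := hc _ PF filterT.
have inF : forall ij, D ij -> filter_from D B (B ij) by move=> ij Dij; exists ij.
exists p; split.
  move=> y Sy; rewrite leNgt; apply/negP => py.
  have := clp _ _ (inF (y, u0) (conj Sy ub0)) (itv_nbhs (i := `]-oo, y[%O) erefl _).
  rewrite in_itv /= py => /(_ isT) [z [[/= yz _]]]; rewrite in_itv /=.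
  by rewrite ltNge yz.
move=> u ubu; rewrite leNgt; apply/negP => up.
have := clp _ _ (inF (s0, u) (conj Ss0 ubu)) (itv_nbhs (i := `]u, +oo[%O) erefl _).
rewrite in_itv /= up => /(_ isT) [z [[/= _ zu]]]; rewrite in_itv /= andbT.
by rewrite ltNge zu.
Qed.
End Lub.
Section Part.
Context {d : Order.disp_t} {K : orderTopologicalType d} {R : realType}.

Definition sig (f G : K -> R) (n : nat) (x t : nat -> K) : R :=
  \sum_(1 <= i < n.+1) f (t i) * (G (x i) - G (x i.-1)).

Lemma riemannE a f G n x t : riemann_sum a f G n x t = f a * G a + sig f G n x t.
Proof. by []. Qed.

Definition cx (n : nat) (x y : nat -> K) : nat -> K :=
  fun i => if (i <= n)%N then x i else y (i - n)%N.

Lemma cx_le n x y i : (i <= n)%N -> cx n x y i = x i.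
Proof. by rewrite /cx => ->. Qed.
Lemma cx_gt n x y i : (n < i)%N -> cx n x y i = y (i - n)%N.
Proof. by rewrite /cx; case: ifP => // h1 h2; lia. Qed.
Lemma cx_pred n x y i : x n = y 0%N -> (n < i)%N -> cx n x y i.-1 = y (i - n).-1%N.
Proof.
move=> e lt; have [le|gt] := leqP i.-1 n.
  have -> : i.-1 = n by lia.
  have -> : (i - n).-1 = 0%N by lia.
  by rewrite cx_le.
rewrite cx_gt //; congr y; lia.
Qed.

Lemma concat_tp a c b n m x t y u :
  tagged_partition a c n x t -> tagged_partition c b m y u ->
  tagged_partition a b (n + m) (cx n x y) (cx n t u).
Proof.
move=> [x0 [xn hx]] [y0 [ym hy]]; split; first by rewrite cx_le.
split.
  have [m0|m0] := eqVneq m 0%N; first by rewrite m0 addn0 cx_le // xn -y0 -ym m0.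
  by rewrite cx_gt ?addKn //; lia.
move=> i /andP[i0 im]; have [le|gt] := leqP i n.
  by rewrite !cx_le //; [apply: hx; rewrite i0 | lia].
rewrite cx_pred ?xn -?y0 // !cx_gt //; apply: hy; lia.
Qed.

Lemma concat_fine (dg : K -> interval K) n m x t y u :
  x n = y 0%N -> Defs.fine dg n x t -> Defs.fine dg m y u -> Defs.fine dg (n + m) (cx n x y) (cx n t u).
Proof.
move=> e fx fy i /andP[i0 im] w; have [le|gt] := leqP i n.
  rewrite !cx_le //; last by lia.
  by apply: fx; rewrite i0.
rewrite cx_pred // !cx_gt //; apply: fy; lia.
Qed.

Lemma concat_sig f G n m x t y u : x n = y 0%N ->
  sig f G (n + m) (cx n x y) (cx n t u) = sig f G n x t + sig f G m y u.
Proof.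
move=> e; rewrite /sig (@big_cat_nat _ _ _ n.+1) //=; last by lia.
congr (_ + _).
  apply: eq_big_nat => i /andP[i0 iN]; rewrite !cx_le //; lia.
have -> : ((n + m).+1 = m + n.+1)%N by lia.
rewrite -{1}[n.+1]add0n big_addn addnK big_add1 /=.
apply: eq_big_nat => i /andP[_ iN].
rewrite cx_pred // ?cx_gt; try lia.
by have -> : (i + n.+1 - n = i.+1)%N by lia.
Qed.

Definition x1 (p q : K) : nat -> K := fun i => if i is 0%N then p else q.

Lemma tp1 p q s : (p <= s)%O -> (s <= q)%O -> tagged_partition p q 1 (x1 p q) (fun _ => s).
Proof.
move=> ps sq; split => //; split => // i /andP[i0 i1].
have -> : i = 1%N by lia.
by split => //; exact: le_trans sq.
Qed.

Lemma sig1 f G p q s : sig f G 1 (x1 p q) (fun _ => s) = f s * (G q - G p).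
Proof. by rewrite /sig big_nat1. Qed.

Lemma fine1 (dg : K -> interval K) p q s :
  (forall w, (p <= w)%O -> (w <= q)%O -> w \in dg s) -> Defs.fine dg 1 (x1 p q) (fun _ => s).
Proof. move=> h i /andP[i0 i1]; have -> : i = 1%N by lia. exact: h. Qed.

End Part.
Section Cousin.
Context {d : Order.disp_t} {K : orderTopologicalType d}.

Lemma cousin (hc : compact [set: K])
  (dense : forall x y : K, (x < y)%O -> exists z, (x < z)%O /\ (z < y)%O)
  (dg : K -> interval K) (g : gauge dg) (a b : K) : (a <= b)%O ->
  exists n x t, tagged_partition a b n x t /\ Defs.fine dg n x t.
Proof.
move=> ab.
pose G := [set y : K | (a <= y)%O /\ (y <= b)%O /\
   exists n x t, tagged_partition a y n x t /\ Defs.fine dg n x t].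
have Ga : G a.
  split => //; split => //; exists 0%N, (fun _ => a), (fun _ => a).
  split; first by split => //; split => // i /andP[i0 i1]; lia.
  by move=> i /andP[i0 i1]; lia.
have [s [ubs lubs]] := lub_ex hc Ga (fun y (Gy : G y) => proj1 (proj2 Gy)).
have as_ : (a <= s)%O := ubs _ Ga.
have sb : (s <= b)%O := lubs _ (fun y (Gy : G y) => proj1 (proj2 Gy)).
have [od sd] := g s.
have rep := open_rep od.
move: sd; rewrite rep => /andP[los his].
set lo := lo_of (dg s) in rep los; set hi := hi_of (dg s) in rep his.
have [y [Gy [ys loy]]] : exists y, G y /\ (y <= s)%O /\ lob lo y.
  case E : lo los => [u|] /= us; last by exists a.
  case: (pselect (exists y, G y /\ (u < y)%O)) => [[y [Gy uy]]|N].
    by exists y; split => //; split => //; exact: ubs.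
  have : (s <= u)%O.
    apply: lubs => y Gy; rewrite leNgt; apply/negP => uy; apply: N; by exists y.
  by rewrite leNgt us.
have step2 : forall z, (s <= z)%O -> (z <= b)%O -> hib hi z -> G z.
  move=> z sz zb hiz.
  have yz : (y <= z)%O := le_trans ys sz.
  split; first exact: le_trans (proj1 Gy) yz.
  split => //.
  case: Gy => _ [_ [n [x [t [tp fx]]]]].
  exists (n + 1)%N, (cx n x (x1 y z)), (cx n t (fun _ => s)).
  have xn : x n = x1 y z 0%N by case: tp => _ [].
  split; first exact: concat_tp tp (tp1 ys sz).
  apply: concat_fine => //; apply: fine1 => w yw wz.
  rewrite rep; apply/andP; split.
    by case: (lo) loy => //= u uy; exact: lt_le_trans uy yw.
  by case: (hi) hiz => //= v zv; exact: le_lt_trans wz zv.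
have sb' : s = b.
  apply/eqP; rewrite eq_le sb /=; rewrite leNgt; apply/negP => sb'.
  have [z [sz [zb hz]]] : exists z, (s < z)%O /\ (z <= b)%O /\ hib hi z.
    case E : hi his => [v|] /= sv; last by exists b.
    case: (leP v b) => vb; last by exists b; split => //; split.
    have [z [s1 z1]] := dense _ _ sv.
    by exists z; split => //; split; [exact: ltW (lt_le_trans z1 vb)|].
  have := ubs _ (step2 _ (ltW sz) zb hz).
  by rewrite leNgt sz.
have hb : hib hi b by rewrite -sb'.
have [_ [_ [n [x [t H]]]]] := step2 b (ltac:(by rewrite sb')) (lexx b) hb.
by exists n, x, t.
Qed.

Lemma block (x y : K) : (x < y)%O -> (forall z, ~ ((x < z)%O /\ (z < y)%O)) ->
  exists dg : K -> interval K, gauge dg /\ forall a b n X t, (a <= x)%O -> (y <= b)%O ->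
    tagged_partition a b n X t -> ~ Defs.fine dg n X t.
Proof.
move=> xy gap.
exists (fun w => if (w <= x)%O then mkitv None (Some y) else mkitv (Some x) None).
split.
  move=> w; case: ifP => wx; split; rewrite ?mkitv_open // mkitvE /=.
    exact: le_lt_trans wx xy.
  by rewrite ltNge wx.
move=> a b n X t ax yb [X0 [Xn hX]] fX.
have claim : forall k, (k <= n)%N -> (x < X k)%O ->
    exists i, [/\ (0 < i <= k)%N, (X i.-1 <= x)%O & (x < X i)%O].
  elim => [|k IH] kn xk.
    by move: xk; rewrite X0 ltNge ax.
  case: (ltP x (X k)) => xk'.
    have [i [i1 i2 i3]] := IH (ltnW kn) xk'.
    by exists i; split => //; lia.
  by exists k.+1; split => //; lia.
have xXn : (x < X n)%O by rewrite Xn; exact: lt_le_trans xy yb.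
have [i [/andP[i0 iN] i2 i3]] := claim n (leqnn n) xXn.
have yi : (y <= X i)%O.
  rewrite leNgt; apply/negP => iy; exact: gap (X i) (conj i3 iy).
have i0N : (0 < i <= n)%N by rewrite i0 iN.
have fx := fX i i0N x i2 (ltW i3).
have fy := fX i i0N y (ltW (le_lt_trans i2 xy)) yi.
by move: fx fy; case: ifP => _; rewrite !mkitvE /= ?andbT ?ltxx.
Qed.
End Cousin.
Section Cauchy.
Context {d : Order.disp_t} {K : orderTopologicalType d} {R : realType}.

Lemma cauchy_lim (P : Type) (fineP : (K -> interval K) -> P -> Prop) (S : P -> R)
  (hmeet : forall g1 g2, gauge g1 -> gauge g2 ->
     exists g, gauge g /\ forall p, fineP g p -> fineP g1 p /\ fineP g2 p)
  (hex : forall g, gauge g -> exists p, fineP g p)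
  (hC : forall e : R, 0 < e -> exists g c, gauge g /\ forall p, fineP g p -> `|S p - c| < e) :
  exists L, forall e : R, 0 < e -> exists g, gauge g /\ forall p, fineP g p -> `|S p - L| < e.
Proof.
pose V := [set v : R | exists e g c, [/\ 0 < e, gauge g,
   (forall p, fineP g p -> `|S p - c| < e) & v = c - e]].
have bnd : forall v e' g' c', V v -> gauge g' ->
    (forall p, fineP g' p -> `|S p - c'| < e') -> v <= c' + e'.
  move=> v e' g' c' [e [g [c [e0 gg hg ->]]]] gg' hg'.
  have [g2 [gg2 h2]] := hmeet _ _ gg gg'.
  have [p fp] := hex _ gg2.
  have [f1 f2] := h2 _ fp.
  move: (hg _ f1) (hg' _ f2); rewrite !ltr_distl => /andP[a1 a2] /andP[b1 b2].
  lra.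
have [g1 [c1 [gg1 hg1]]] := hC 1 ltr01.
have V0 : V !=set0 by exists (c1 - 1), 1, g1, c1; split => //; exact: ltr01.
have ubV : has_ubound V by exists (c1 + 1) => v Vv; exact: bnd _ _ _ _ Vv gg1 hg1.
exists (sup V) => e e0.
have e20 : 0 < e / 2 by rewrite divr_gt0.
have [g [c [gg hg]]] := hC _ e20.
exists g; split => // p fp.
have s1 : sup V <= c + e / 2 by apply: ge_sup => // v Vv; exact: bnd _ _ _ _ Vv gg hg.
have s2 : c - e / 2 <= sup V by apply: ub_le_sup => //; exists (e / 2), g, c; split.
move: (hg _ fp); rewrite !ltr_distl => /andP[a1 a2].
apply/andP; split; lra.
Qed.
End Cauchy.
Section Main.
Context {d : Order.disp_t} {K : orderTopologicalType d} {R : realType}.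
Variables (zK oK : K) (hc : compact [set: K]).
Hypotheses (hzK : forall y : K, (zK <= y)%O) (hoK : forall y : K, (y <= oK)%O).
Hypothesis dense : forall x y : K, (x < y)%O -> exists z, (x < z)%O /\ (z < y)%O.
Variables (h T : K -> R).
Hypothesis hint : integrable_on zK oK h T.

Let Hf := fun x : K => integral_on zK x h T.

Lemma gmeet_fine (g1 g2 : K -> interval K) n x t : gauge g1 -> gauge g2 ->
  Defs.fine (gmeet g1 g2) n x t -> Defs.fine g1 n x t /\ Defs.fine g2 n x t.
Proof.
move=> gg1 gg2 fx; have [_ hm] := gmeetP gg1 gg2.
by split => i hi w w1 w2; have := hm _ _ (fx i hi w w1 w2) => -[].
Qed.

Lemma sub_int b : exists L, is_integral_on zK b h T L.
Proof.
have [A0 hA0] := hint.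
pose P := (nat * (nat -> K) * (nat -> K))%type.
pose fP := (fun g (p : P) => tagged_partition zK b p.1.1 p.1.2 p.2 /\ Defs.fine g p.1.1 p.1.2 p.2).
pose SP := (fun p : P => riemann_sum zK h T p.1.1 p.1.2 p.2).
have hm : forall g1 g2, gauge g1 -> gauge g2 ->
     exists g, gauge g /\ forall p, fP g p -> fP g1 p /\ fP g2 p.
  move=> g1 g2 gg1 gg2; exists (gmeet g1 g2); split; first exact: (gmeetP gg1 gg2).1.
  move=> [[n x] t] /= [tp fx]; have [f1 f2] := gmeet_fine gg1 gg2 fx.
  by split; split.
have hex : forall g, gauge g -> exists p, fP g p.
  move=> g gg; have [n [x [t [tp fx]]]] := cousin hc dense gg (hzK b).
  by exists (n, x, t).
have hC : forall e : R, 0 < e -> exists g c, gauge g /\ forall p, fP g p -> `|SP p - c| < e.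
  move=> e e0; have [g [gg hg]] := hA0 e e0.
  have [m [y [u [tq fq]]]] := cousin hc dense gg (hoK b).
  exists g, (A0 - sig h T m y u); split => // -[[n x] t] [tp fx].
  simpl in tp, fx.
  have xn : x n = y 0%N by rewrite (proj1 (proj2 tp)) (proj1 tq).
  have := hg _ _ _ (concat_tp tp tq) (concat_fine xn fx fq).
  rewrite /SP /= !riemannE concat_sig //.
  suff -> : h zK * T zK + sig h T n x t - (A0 - sig h T m y u) =
            h zK * T zK + (sig h T n x t + sig h T m y u) - A0 by [].
  ring.
have [L HL] := cauchy_lim hm hex hC.
exists L => e e0; have [g [gg hg]] := HL e e0; exists g; split => // n x t tp fx.
exact: (hg (n, x, t)).
Qed.

Lemma HP b : is_integral_on zK b h T (Hf b).
Proof. exact: (xgetPex 0 (sub_int b)). Qed.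

Lemma eq_of_close (a b : R) : (forall e, 0 < e -> `|a - b| < e) -> a = b.
Proof.
move=> H; case: (eqVneq a b) => // ne.
have := H `|a - b|; rewrite normr_gt0 subr_eq0 ne ltxx => /(_ isT).
by [].
Qed.

Lemma H0 : Hf zK = h zK * T zK.
Proof.
apply: esym; apply: eq_of_close => e e0.
have [g [gg hg]] := HP zK e0.
have := hg 0%N (fun _ => zK) (fun _ => zK).
rewrite riemannE /sig big_geq // addr0; apply.
  by split => //; split => // i /andP[i0 i1]; lia.
by move=> i /andP[i0 i1]; lia.
Qed.

Lemma approx p q : (p <= q)%O -> forall g, gauge g -> forall eta : R, 0 < eta ->
  exists m y u, tagged_partition p q m y u /\ Defs.fine g m y u /\
    `|sig h T m y u - (Hf q - Hf p)| < eta.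
Proof.
move=> pq g gg eta eta0.
have e2 : 0 < eta / 2 by rewrite divr_gt0.
have [gp [ggp hp]] := HP p e2.
have [gq [ggq hq]] := HP q e2.
have [gg' _] := gmeetP ggp ggq.
have [gg3 _] := gmeetP gg gg'.
have [n [x [t [tp fx]]]] := cousin hc dense gg3 (hzK p).
have [m [y [u [tq fq]]]] := cousin hc dense gg3 pq.
have xn : x n = y 0%N by rewrite (proj1 (proj2 tp)) (proj1 tq).
exists m, y, u; split => //; split; first exact: (gmeet_fine gg gg' fq).1.
have fx2 := (gmeet_fine ggp ggq (gmeet_fine gg gg' fx).2).1.
have fc := (gmeet_fine ggp ggq (gmeet_fine gg gg' (concat_fine xn fx fq)).2).2.
have a1 := hp _ _ _ tp fx2.
have a2 := hq _ _ _ (concat_tp tp tq) fc.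
move: a1 a2; rewrite !riemannE concat_sig // !ltr_distl => /andP[a1 a1'] /andP[a2 a2'].
apply/andP; split; lra.
Qed.

Lemma tele (F : nat -> R) n : \sum_(1 <= i < n.+1) (F i - F i.-1) = F n - F 0%N.
Proof.
elim: n => [|n IH]; first by rewrite big_geq // subrr.
by rewrite big_nat_recr //= IH; ring.
Qed.

Definition Dd (x t : nat -> K) (i : nat) : R :=
  h (t i) * (T (x i) - T (x i.-1)) - (Hf (x i) - Hf (x i.-1)).

Lemma SH e : 0 < e -> exists g, gauge g /\ forall n x t,
  tagged_partition zK oK n x t -> Defs.fine g n x t -> forall S : pred nat,
  `|\sum_(1 <= i < n.+1 | S i) Dd x t i| <= e.
Proof.
move=> e0; have e2 : 0 < e / 2 by rewrite divr_gt0.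
have [g [gg hg]] := HP oK e2.
exists g; split => // n x t tp fx S.
have n1 : 0 < n%:R + 1 :> R by rewrite ltr_pwDr // ler0n.
pose eta := e / 2 / (n%:R + 1).
have eta0 : 0 < eta by rewrite divr_gt0.
have etaE : eta * (n%:R + 1) = e / 2 by rewrite divfK // gt_eqF.
pose W k := \sum_(1 <= i < k.+1) (if S i then h (t i) * (T (x i) - T (x i.-1))
                                   else Hf (x i) - Hf (x i.-1)).
have [x0 [xn hx]] := tp.
have claim : forall k, (k <= n)%N -> exists m y u, tagged_partition zK (x k) m y u /\
    Defs.fine g m y u /\ `|sig h T m y u - W k| <= k%:R * eta.
  elim => [|k IH] kn.
    exists 0%N, (fun _ => zK), (fun _ => zK); split.
      by split => //; split => // i /andP[i0 i1]; lia.
    split; first by move=> i /andP[i0 i1]; lia.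
    by rewrite /sig /W !big_geq // subrr normr0 mul0r.
  have [m [y [u [tq [fq bq]]]]] := IH (ltnW kn).
  have ym : y m = x k by case: tq => _ [].
  have [hk1 [hk2 hk3]] : (x k <= x k.+1)%O /\ (x k <= t k.+1)%O /\ (t k.+1 <= x k.+1)%O.
    by have := hx k.+1; rewrite kn /= => /(_ isT) [? [? ?]].
  have WS : W k.+1 = W k + (if S k.+1 then h (t k.+1) * (T (x k.+1) - T (x k))
                                   else Hf (x k.+1) - Hf (x k)).
    by rewrite /W big_nat_recr.
  case SE : (S k.+1) WS => WS.
    exists (m + 1)%N, (cx m y (x1 (x k) (x k.+1))), (cx m u (fun _ => t k.+1)).
    split; first exact: concat_tp tq (tp1 hk2 hk3).
    split.
      apply: concat_fine => //; apply: fine1 => w w1 w2.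
      by apply: (fx k.+1) => //; rewrite kn.
    rewrite concat_sig // sig1 WS.
    have -> : sig h T m y u + h (t k.+1) * (T (x k.+1) - T (x k)) -
       (W k + h (t k.+1) * (T (x k.+1) - T (x k))) = sig h T m y u - W k by ring.
    apply: (le_trans bq); by rewrite ler_wpM2r ?ltW // ltr_nat.
  have [m' [y' [u' [tq' [fq' bq']]]]] := approx hk1 gg eta0.
  have ym' : y m = y' 0%N by rewrite ym (proj1 tq').
  exists (m + m')%N, (cx m y y'), (cx m u u').
  split; first exact: concat_tp tq tq'.
  split; first exact: concat_fine.
  rewrite concat_sig // WS.
  move: bq bq'; rewrite ler_distl ltr_distl => /andP[b1 b2] /andP[b3 b4].
  rewrite ler_distl -natr1 mulrDl mul1r; apply/andP; split; lra.
have [m [y [u [tR [fR bR]]]]] := claim n (leqnn n).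
rewrite xn in tR.
have := hg _ _ _ tR fR; rewrite riemannE.
have E1 : \sum_(1 <= i < n.+1 | S i) Dd x t i =
    W n - \sum_(1 <= i < n.+1) (Hf (x i) - Hf (x i.-1)).
  rewrite big_mkcond /W -sumrB; apply: eq_bigr => i _.
  by case: (S i) => //; rewrite subrr.
rewrite E1 (tele (fun i => Hf (x i))) xn x0 H0.
have nE : n%:R * eta <= e / 2 by rewrite -etaE mulrDr mulr1 mulrC lerDl ltW.
move: bR; rewrite ler_distl => /andP[b1 b2].
rewrite ltr_distl => /andP[c1 c2].
rewrite ler_norml; apply/andP; split; lra.
Qed.

Lemma SHabs e : 0 < e -> exists g, gauge g /\ forall n x t,
  tagged_partition zK oK n x t -> Defs.fine g n x t ->
  \sum_(1 <= i < n.+1) `|Dd x t i| <= e + e.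
Proof.
move=> e0; have [g [gg hg]] := SH e0; exists g; split => // n x t tp fx.
rewrite (bigID (fun i => 0 <= Dd x t i)) /=.
have E1 : \sum_(1 <= i < n.+1 | 0 <= Dd x t i) `|Dd x t i| =
          \sum_(1 <= i < n.+1 | 0 <= Dd x t i) Dd x t i.
  by apply: eq_bigr => i hi; rewrite ger0_norm.
have E2 : \sum_(1 <= i < n.+1 | ~~ (0 <= Dd x t i)) `|Dd x t i| =
          - \sum_(1 <= i < n.+1 | ~~ (0 <= Dd x t i)) Dd x t i.
  by rewrite -sumrN; apply: eq_bigr => i hi; rewrite ltr0_norm // ltNge.
rewrite E1 E2.
have := hg _ _ _ tp fx (fun i => 0 <= Dd x t i).
have := hg _ _ _ tp fx (fun i => ~~ (0 <= Dd x t i)).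
rewrite !ler_norml => /andP[a1 a2] /andP[b1 b2]; lra.
Qed.

Lemma diffE f n x t : x 0%N = zK ->
  riemann_sum zK (fun y => f y * h y) T n x t - riemann_sum zK f Hf n x t =
  \sum_(1 <= i < n.+1) f (t i) * Dd x t i.
Proof.
move=> x0; rewrite !riemannE H0 /sig.
have -> : forall a b c d : R, a + c - (b + d) = (a - b) + (c - d) by move=> *; ring.
rewrite -sumrB; have -> : f zK * h zK * T zK - f zK * (h zK * T zK) = 0 by ring.
by rewrite add0r; apply: eq_bigr => i _; rewrite /Dd; ring.
Qed.

Lemma key f (M : R) : (forall y, `|f y| <= M) -> forall A,
  is_integral_on zK oK f Hf A <-> is_integral_on zK oK (fun y => f y * h y) T A.
Proof.
move=> fM A.
have M0 : 0 <= M := le_trans (normr_ge0 _) (fM zK).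
have bound : forall eps : R, 0 < eps -> exists g, gauge g /\ forall n x t,
    tagged_partition zK oK n x t -> Defs.fine g n x t ->
    `|riemann_sum zK (fun y => f y * h y) T n x t - riemann_sum zK f Hf n x t| < eps.
  move=> eps eps0.
  have M1 : 0 < 4 * (M + 1) by rewrite mulr_gt0 // ltr_pwDr.
  pose e' := eps / (4 * (M + 1)).
  have e'0 : 0 < e' by rewrite divr_gt0.
  have e'E : e' * (4 * (M + 1)) = eps by rewrite divfK // gt_eqF.
  have [g [gg hg]] := SHabs e'0; exists g; split => // n x t tp fx.
  rewrite diffE; last by case: tp.
  apply: (le_lt_trans (ler_norm_sum _ _ _)).
  apply: (@le_lt_trans _ _ (\sum_(1 <= i < n.+1) M * `|Dd x t i|)).
    by apply: ler_sum => i _; rewrite normrM ler_wpM2r.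
  rewrite -mulr_sumr; apply: (@le_lt_trans _ _ (M * (e' + e'))).
    by rewrite ler_wpM2l // hg.
  nra.
split => hA eps eps0; have e2 : 0 < eps / 2 by rewrite divr_gt0.
  have [g1 [gg1 h1]] := hA _ e2; have [g2 [gg2 h2]] := bound _ e2.
  have [gg _] := gmeetP gg1 gg2.
  exists (gmeet g1 g2); split => // n x t tp fx.
  have [f1 f2] := gmeet_fine gg1 gg2 fx.
  move: (h1 _ _ _ tp f1) (h2 _ _ _ tp f2); rewrite !ltr_distl.
  move=> /andP[a1 a2] /andP[b1 b2]; apply/andP; split; lra.
have [g1 [gg1 h1]] := hA _ e2; have [g2 [gg2 h2]] := bound _ e2.
have [gg _] := gmeetP gg1 gg2.
exists (gmeet g1 g2); split => // n x t tp fx.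
have [f1 f2] := gmeet_fine gg1 gg2 fx.
move: (h1 _ _ _ tp f1) (h2 _ _ _ tp f2); rewrite !ltr_distl.
move=> /andP[a1 a2] /andP[b1 b2]; apply/andP; split; lra.
Qed.

End Main.
Unset Implicit Arguments. Set Strict Implicit.
Theorem lemma6p8 (R : realType) (d : Order.disp_t) (K : orderTopologicalType d)
  (zK oK : K)
  (hcompact : compact [set: K])
  (hzK : forall y : K, (zK <= y)%O) (hoK : forall y : K, (y <= oK)%O)
  (hzo : (zK < oK)%O)
  (T h f : K -> R)
  (Tmono : forall x y : K, (x <= y)%O -> T x <= T y)
  (Tright : forall x : K,
     (T @ within [set y : K | (x <= y)%O] (nbhs x)) --> T x)
  (hint : integrable_on zK oK h T)
  (fbd : exists M : R, forall x : K, `|f x| <= M) :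
  let H := fun x : K => integral_on zK x h T in
  (integrable_on zK oK f H <-> integrable_on zK oK (fun x => f x * h x) T) /\
  (integrable_on zK oK f H ->
     integral_on zK oK f H = integral_on zK oK (fun x => f x * h x) T).
Proof.
move=> H.
have E : forall A, is_integral_on zK oK f H A <->
                   is_integral_on zK oK (fun x => f x * h x) T A.
  case: (pselect (forall x y : K, (x < y)%O -> exists z, (x < z)%O /\ (z < y)%O))
    => [dense|nd].
    have [M fM] := fbd.
    exact: (key hcompact hzK hoK dense hint fM).
  move/existsNP: nd => [x /existsNP [y /not_implyP [xy /forallNP gap]]].
  have [dg [gdg hno]] := block xy gap.
  have triv : forall (F G : K -> R) A, is_integral_on zK oK F G A.
    move=> F G A eps _; exists dg; split => // n X t tp fX.
    by exfalso; exact: (hno zK oK n X t (hzK x) (hoK y) tp fX).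
  by move=> A; split => _; apply: triv.
split.
  by split => -[A hA]; exists A; apply/E.
move=> _; rewrite /integral_on; congr xget.
by apply: eq_set => A; apply: propext; exact: E.
Qed.
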